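(* Let $p,n\in\mathbb{N}$ with $p,n\ge1$, $r\in\mathbb{N}$ with $r\le p$, and assume $n\ge\max\{2p-\lfloor p/2\rfloor,\;2p-2\lfloor p/2\rfloor+1\}$. Then $$X^{p,r,1}=n^{2r-1}\big(T_n^{\bm\alpha}+H_n^{\bm\alpha,1}\big),$$ where $\alpha_k=(-1)^r\mathcal{N}_{2p+1}^{(2r)}(p+1-k)$, $k=0,\dots,p$.
   Context: Cardinal B-spline: $\mathcal{N}_0(t)=1$ for $t\in[0,1)$, $0$ otherwise; $\mathcal{N}_p(t)=\frac{t}{p}\mathcal{N}_{p-1}(t)+\frac{p+1-t}{p}\mathcal{N}_{p-1}(t-1)$, $p\ge1$ (support $[0,p+1]$, $C^{p-1}$). Neumann basis: for $c\in\mathbb{R}$ put $C_c(x)=\mathcal{N}_p\big(nx-c+\tfrac{p+1}{2}\big)$ (B-spline centred at $c/n$), and for $i=1,\dots,n$, $x\in[0,1]$, $$N^p_{i,1}(x)=\sum_{m\in\mathbb{Z}}\Big(C_{i-\frac12+2mn}(x)+C_{-(i-\frac12)+2mn}(x)\Big).$$ These form a basis of the $C^{p-1}$ splines of degree $p$ with breakpoints $(k+\frac12)/n$ ($p$ odd) or $k/n$ ($p$ even) whose derivatives of all odd orders $\le p$ vanish at $0$ and $1$. $X^{p,r,1}_{i,j}=\int_0^1(N^p_{i,1})^{(r)}(N^p_{j,1})^{(r)}\,\mathrm{d}x$ (piecewise derivatives if $r=p$). For $\bm\alpha\in\mathbb{R}^{p+1}$, $n\ge p+1$, with $\alpha_k=0$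 for $k>p$: $(T_n^{\bm\alpha})_{i,j}=\alpha_{|i-j|}$ and $(H_n^{\bm\alpha,1})_{i,j}=\alpha_{i+j-1}+\alpha_{2n+1-i-j}$. *)

(* Defs.v *)
From Stdlib Require Import Reals Lra Lia ZArith.
From Coquelicot Require Import Coquelicot.
Open Scope R_scope.

Fixpoint cardB (p : nat) (t : R) : R :=
  match p with
  | O => if Rle_dec 0 t then (if Rlt_dec t 1 then 1 else 0) else 0
  | S q => t / INR (S q) * cardB q t
           + (INR (S q) + 1 - t) / INR (S q) * cardB q (t - 1)
  end.

Definition sumZ (f : Z -> R) : R :=
  Series (fun k => f (Z.of_nat k)) + Series (fun k => f (- Z.of_nat k - 1)%Z).

Definition Cc (p n : nat) (c x : R) : R :=
  cardB p (INR n * x - c + (INR p + 1) / 2).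

(* Neumann basis N^p_{i,1}, i = 1..n (defined by the same formula on all of R). *)
Definition NeuB (p n i : nat) (x : R) : R :=
  sumZ (fun m =>
    Cc p n (INR i - 1/2 + 2 * IZR m * INR n) x
    + Cc p n (- (INR i - 1/2) + 2 * IZR m * INR n) x).

(* X^{p,r,1}_{i,j}: integral over [0,1] of the product of r-th derivatives
   (for r = p these are piecewise derivatives; the values at the finitely many
   breakpoints do not affect the integral). *)
Definition Xmat (p r n i j : nat) : R :=
  RInt (fun x => Derive_n (NeuB p n i) r x * Derive_n (NeuB p n j) r x) 0 1.

Definition alpha (p r k : nat) : R :=
  if Nat.leb k p
  then (-1) ^ r * Derive_n (cardB (2 * p + 1)) (2 * r) (INR p + 1 - INR k)
  else 0.

Definition Tmat (a : nat -> R) (i j : nat) : R :=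
  a (if Nat.leb i j then (j - i)%nat else (i - j)%nat).

Definition Hmat (a : nat -> R) (n i j : nat) : R :=
  a (i + j - 1)%nat + a (2 * n + 1 - i - j)%nat.

(* Main.v *)
Require Import Defs.
From Stdlib Require Import Reals ZArith Lra Lia.
From Coquelicot Require Import Coquelicot.
Open Scope R_scope.
Set Bullet Behavior "Strict Subproofs".

Lemma cardB_S (q : nat) (t : R) : cardB (S q) t =
  t / (INR q + 1) * cardB q t + (INR q + 2 - t) / (INR q + 1) * cardB q (t - 1).
Proof. change (cardB (S q) t) with (t / INR (S q) * cardB q t + (INR (S q) + 1 - t) / INR (S q) * cardB q (t - 1)). rewrite S_INR. replace (INR q + 1 + 1 - t) with (INR q + 2 - t) by ring. reflexivity. Qed.

Lemma cardB_neg (p : nat) (t : R) : t < 0 -> cardB p t = 0.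
Proof.
  revert t; induction p as [|q IH]; intros t Ht.
  - simpl. destruct (Rle_dec 0 t); [lra|reflexivity].
  - rewrite cardB_S, IH by lra. rewrite IH by lra. ring.
Qed.

Lemma cardB_big (p : nat) (t : R) : INR p + 1 <= t -> cardB p t = 0.
Proof.
  revert t; induction p as [|q IH]; intros t Ht.
  - simpl in *. destruct (Rle_dec 0 t); [|reflexivity]. destruct (Rlt_dec t 1); lra.
  - rewrite S_INR in Ht. rewrite cardB_S, IH by lra. rewrite IH by lra. ring.
Qed.

Lemma cardB_0 (p : nat) : (1 <= p)%nat -> cardB p 0 = 0.
Proof.
  intros H. destruct p as [|q]; [lia|]. rewrite cardB_S, (cardB_neg q (0-1)) by lra. lra.
Qed.

Lemma cardB0_val (t : R) : cardB 0 t = if Rle_dec 0 t then (if Rlt_dec t 1 then 1 else 0) else 0.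
Proof. reflexivity. Qed.

Definition nonint (t : R) := forall z : Z, t <> IZR z.

Lemma nonint_shift (t : R) (z : Z) : nonint t -> nonint (t + IZR z).
Proof. intros H w E. apply (H (w - z)%Z). rewrite minus_IZR. lra. Qed.

Lemma nonint_m1 (t : R) : nonint t -> nonint (t - 1).
Proof. intros H. replace (t - 1) with (t + IZR (-1)) by (simpl; lra). apply nonint_shift, H. Qed.

Lemma loc_of_delta (t d : R) (P : R -> Prop) : 0 < d ->
  (forall y, Rabs (y - t) < d -> P y) -> locally t P.
Proof.
  intros Hd H. exists (mkposreal d Hd). intros y Hy. apply H. exact Hy.
Qed.

Lemma cardB0_loc (t : R) : nonint t -> locally t (fun y => cardB 0 y = cardB 0 t).
Proof.
  intros H. assert (H0 := H 0%Z). assert (H1 := H 1%Z). simpl in H0, H1.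
  destruct (Rlt_dec t 0) as [Hn|Hn].
  - apply (loc_of_delta t (-t)); [lra|]. intros y Hy. apply Rabs_def2 in Hy.
    rewrite !cardB0_val. destruct (Rle_dec 0 y); destruct (Rle_dec 0 t); try lra; reflexivity.
  - destruct (Rlt_dec t 1) as [Hm|Hm].
    + apply (loc_of_delta t (Rmin t (1 - t))). { apply Rmin_glb_lt; lra. }
      intros y Hy. apply Rabs_def2 in Hy. assert (Rmin t (1-t) <= t) by apply Rmin_l.
      assert (Rmin t (1-t) <= 1 - t) by apply Rmin_r.
      rewrite !cardB0_val. destruct (Rle_dec 0 y); destruct (Rle_dec 0 t); try lra;
      destruct (Rlt_dec y 1); destruct (Rlt_dec t 1); lra.
    + apply (loc_of_delta t (t - 1)); [lra|]. intros y Hy. apply Rabs_def2 in Hy.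
      rewrite !cardB0_val. destruct (Rle_dec 0 y); destruct (Rle_dec 0 t); try lra;
      destruct (Rlt_dec y 1); destruct (Rlt_dec t 1); lra.
Qed.


Lemma isd_mult (f g : R -> R) x df dg : is_derive f x df -> is_derive g x dg ->
  is_derive (fun y => f y * g y) x (df * g x + f x * dg).
Proof. intros H1 H2. apply (is_derive_mult f g x df dg H1 H2). intros; apply Rmult_comm. Qed.
Lemma isd_plus (f g : R -> R) x df dg : is_derive f x df -> is_derive g x dg ->
  is_derive (fun y => f y + g y) x (df + dg).
Proof. intros H1 H2. apply (is_derive_plus f g x df dg H1 H2). Qed.
Lemma isd_minus (f g : R -> R) x df dg : is_derive f x df -> is_derive g x dg ->
  is_derive (fun y => f y - g y) x (df - dg).
Proof. intros H1 H2. apply (is_derive_minus f g x df dg H1 H2). Qed.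
Lemma isd_scal (f : R -> R) x k df : is_derive f x df -> is_derive (fun y => k * f y) x (k * df).
Proof. apply is_derive_scal. Qed.
Lemma isd_shift (f : R -> R) x c d : is_derive f (x + c) d -> is_derive (fun y => f (y + c)) x d.
Proof.
  intros H. assert (H2 : is_derive (fun y => y + c) x 1). { auto_derive; auto. }
  generalize (is_derive_comp f (fun y => y + c) x d 1 H H2). intros H3.
  replace d with (scal 1 d). exact H3. unfold scal; simpl; unfold mult; simpl; ring.
Qed.
Lemma isd_lin (f : R -> R) x a b d : is_derive f (a * x + b) d -> is_derive (fun y => f (a * y + b)) x (a * d).
Proof.
  intros H. assert (H2 : is_derive (fun y => a * y + b) x a). { auto_derive; auto. ring. }
  generalize (is_derive_comp f (fun y => a * y + b) x d a H H2). intros H3.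
  replace (a * d) with (scal a d). exact H3. reflexivity.
Qed.
Lemma isd_ext (f g : R -> R) (x d d' : R) : (forall y, f y = g y) -> d = d' -> is_derive f x d -> is_derive g x d'.
Proof. intros H E D. subst. eapply is_derive_ext; [exact H|exact D]. Qed.

Lemma D_nonint (p : nat) (t : R) : nonint t ->
  is_derive (cardB (S p)) t (cardB p t - cardB p (t - 1)).
Proof.
  revert t; induction p as [|q IH]; intros t Ht.
  - apply (is_derive_ext_loc (fun y => y / (INR 0 + 1) * cardB 0 t + (INR 0 + 2 - y) / (INR 0 + 1) * cardB 0 (t - 1))).
    + assert (L1 := cardB0_loc t Ht). assert (L2 := cardB0_loc (t-1) (nonint_m1 t Ht)).
      destruct L1 as [e1 He1]. destruct L2 as [e2 He2].
      exists (mkposreal _ (Rmin_stable_in_posreal e1 e2)). intros y Hy.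
      rewrite cardB_S. rewrite (He1 y). rewrite (He2 (y - 1)). reflexivity.
      * eapply Rlt_le_trans; [|apply Rmin_r]. unfold ball in *; simpl in *; unfold AbsRing_ball in *; simpl in *.
        unfold minus, plus, opp in *; simpl in *. replace (y - 1 + - (t - 1)) with (y + - t) by ring. exact Hy.
      * eapply Rlt_le_trans; [|apply Rmin_l]. exact Hy.
    + simpl INR. auto_derive; [auto|]. rewrite !cardB0_val. field.
  - assert (D1 := IH t Ht). assert (D2 := IH (t - 1) (nonint_m1 t Ht)).
    assert (D2' : is_derive (fun y => cardB (S q) (y + -1)) t (cardB q (t - 1) - cardB q (t - 1 - 1))).
    { apply isd_shift. exact D2. }
    assert (Da : is_derive (fun y => y / (INR q + 1 + 1)) t (/ (INR q + 1 + 1))).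
    { pose proof (pos_INR q). auto_derive; repeat split; try (intro; lra); field; lra. }
    assert (Db : is_derive (fun y => (INR q + 1 + 2 - y) / (INR q + 1 + 1)) t (- / (INR q + 1 + 1))).
    { pose proof (pos_INR q). auto_derive; repeat split; try (intro; lra); field; lra. }
    generalize (isd_plus _ _ t _ _ (isd_mult _ _ t _ _ Da D1) (isd_mult _ _ t _ _ Db D2')). intros D.
    eapply isd_ext; [| |exact D].
    { intros y. rewrite (cardB_S (S q)). rewrite S_INR. replace (y + -1) with (y - 1) by ring. reflexivity. }
    replace (t + -1) with (t - 1) by ring. rewrite !cardB_S. field. pose proof (pos_INR q). lra.
Qed.

Lemma cont_plus (f g : R -> R) x : continuous f x -> continuous g x -> continuous (fun y => f y + g y) x.
Proof. intros; apply (continuous_plus f g); auto. Qed.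
Lemma cont_minus (f g : R -> R) x : continuous f x -> continuous g x -> continuous (fun y => f y - g y) x.
Proof. intros; apply (continuous_minus f g); auto. Qed.
Lemma cont_mult (f g : R -> R) x : continuous f x -> continuous g x -> continuous (fun y => f y * g y) x.
Proof. intros; apply (continuous_mult f g); auto. Qed.
Lemma cont_lin (f : R -> R) x a b : continuous f (a * x + b) -> continuous (fun y => f (a * y + b)) x.
Proof.
  intros H. apply (continuous_comp (fun y => a * y + b) f). 2: exact H.
  apply cont_plus; [apply cont_mult|]; [apply continuous_const|apply continuous_id|apply continuous_const].
Qed.
Lemma cont_shift (f : R -> R) x c : continuous f (x + c) -> continuous (fun y => f (y + c)) x.
Proof.
  intros H. apply (continuous_comp (fun y => y + c) f). 2: exact H.
  apply cont_plus; [apply continuous_id|apply continuous_const].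
Qed.
Lemma cont_ext (f g : R -> R) x : (forall y, f y = g y) -> continuous f x -> continuous g x.
Proof. intros E H. replace g with f. exact H. apply FunctionalExtensionality.functional_extensionality. exact E. Qed.

Lemma cardB1_formula (t : R) : cardB 1 t = (1 - Rabs (t - 1) + Rabs (1 - Rabs (t - 1))) / 2.
Proof.
  rewrite cardB_S. rewrite !cardB0_val. simpl INR.
  destruct (Rle_dec 0 t); destruct (Rlt_dec t 1); destruct (Rle_dec 0 (t-1)); destruct (Rlt_dec (t-1) 1);
  unfold Rabs; repeat destruct Rcase_abs; try lra.
Qed.

Lemma cardB_cont (p : nat) (t : R) : continuous (cardB (S p)) t.
Proof.
  revert t; induction p as [|q IH]; intros t.
  - apply (cont_ext (fun t => (1 - Rabs (t - 1) + Rabs (1 - Rabs (t - 1))) / 2)).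
    { intros; rewrite cardB1_formula; reflexivity. }
    apply cont_mult; [|apply continuous_const].
    apply cont_plus.
    + apply cont_minus; [apply continuous_const|].
      apply (continuous_comp (fun y => y - 1) Rabs); [apply cont_minus; [apply continuous_id|apply continuous_const]|apply continuous_Rabs].
    + apply (continuous_comp (fun y => 1 - Rabs (y - 1)) Rabs); [|apply continuous_Rabs].
      apply cont_minus; [apply continuous_const|].
      apply (continuous_comp (fun y => y - 1) Rabs); [apply cont_minus; [apply continuous_id|apply continuous_const]|apply continuous_Rabs].
  - apply (cont_ext (fun y => y / (INR (S q) + 1) * cardB (S q) y + (INR (S q) + 2 - y) / (INR (S q) + 1) * cardB (S q) (y + -1))).
    { intros y. rewrite (cardB_S (S q) y). replace (y + -1) with (y - 1) by ring. reflexivity. }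
    apply cont_plus; apply cont_mult.
    + apply cont_mult; [apply continuous_id|apply continuous_const].
    + apply IH.
    + apply cont_mult; [apply cont_minus; [apply continuous_const|apply continuous_id]|apply continuous_const].
    + apply cont_shift. apply IH.
Qed.

Definition intfree (a b : R) := forall z : Z, ~ (a < IZR z < b).

Definition PC (f : R -> R) := forall a b, a < b -> intfree a b ->
  exists g : R -> R, (forall x, continuous g x) /\ (forall x, a < x < b -> f x = g x).

Lemma intfree_nonint a b x : intfree a b -> a < x < b -> nonint x.
Proof. intros H Hx z E. apply (H z). subst. exact Hx. Qed.

Lemma PC_cont f : (forall x, continuous f x) -> PC f.
Proof. intros H a b _ _. exists f. split; auto. Qed.

Lemma PC_plus f g : PC f -> PC g -> PC (fun x => f x + g x).
Proof.
  intros Hf Hg a b Hab Hi. destruct (Hf a b Hab Hi) as [f1 [C1 E1]]. destruct (Hg a b Hab Hi) as [g1 [C2 E2]].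
  exists (fun x => f1 x + g1 x). split. intros; apply cont_plus; auto. intros x Hx; rewrite E1, E2; auto.
Qed.
Lemma PC_minus f g : PC f -> PC g -> PC (fun x => f x - g x).
Proof.
  intros Hf Hg a b Hab Hi. destruct (Hf a b Hab Hi) as [f1 [C1 E1]]. destruct (Hg a b Hab Hi) as [g1 [C2 E2]].
  exists (fun x => f1 x - g1 x). split. intros; apply cont_minus; auto. intros x Hx; rewrite E1, E2; auto.
Qed.
Lemma PC_mult f g : PC f -> PC g -> PC (fun x => f x * g x).
Proof.
  intros Hf Hg a b Hab Hi. destruct (Hf a b Hab Hi) as [f1 [C1 E1]]. destruct (Hg a b Hab Hi) as [g1 [C2 E2]].
  exists (fun x => f1 x * g1 x). split. intros; apply cont_mult; auto. intros x Hx; rewrite E1, E2; auto.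
Qed.
Lemma PC_scal f k : PC f -> PC (fun x => k * f x).
Proof. intros H. apply (PC_mult (fun _ => k) f); auto. apply PC_cont. intros; apply continuous_const. Qed.
Lemma PC_shift f (z : Z) : PC f -> PC (fun x => f (x + IZR z)).
Proof.
  intros H a b Hab Hi. destruct (H (a + IZR z) (b + IZR z)) as [g [C E]].
  - lra.
  - intros w Hw. apply (Hi (w - z)%Z). rewrite minus_IZR. lra.
  - exists (fun x => g (x + IZR z)). split. intros; apply cont_shift; auto. intros x Hx; apply E; lra.
Qed.
Lemma PC_ext f g : (forall x, f x = g x) -> PC f -> PC g.
Proof. intros E H. replace g with f; auto. apply FunctionalExtensionality.functional_extensionality; auto. Qed.

Lemma cardB0_intfree a b x y : intfree a b -> a < x < b -> a < y < b -> cardB 0 x = cardB 0 y.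
Proof.
  intros H Hx Hy. assert (H0 := H 0%Z). assert (H1 := H 1%Z). simpl in H0, H1.
  rewrite !cardB0_val.
  destruct (Rle_dec 0 x); destruct (Rle_dec 0 y); destruct (Rlt_dec x 1); destruct (Rlt_dec y 1); try reflexivity;
  exfalso; try (apply H0; lra); try (apply H1; lra).
Qed.

Lemma PC_cardB0 : PC (cardB 0).
Proof.
  intros a b Hab Hi. exists (fun _ => cardB 0 ((a + b) / 2)). split.
  intros; apply continuous_const. intros x Hx. apply (cardB0_intfree a b); auto; lra.
Qed.

Lemma PC_cardB p : PC (cardB p).
Proof. destruct p. apply PC_cardB0. apply PC_cont. apply cardB_cont. Qed.

Lemma up_least (a : R) (z : Z) : a < IZR z -> IZR (up a) <= IZR z.
Proof.
  intros H. destruct (archimed a) as [H1 H2].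
  destruct (Z_lt_le_dec z (up a)) as [L|L].
  - assert (IZR z <= IZR (up a) - 1). { rewrite <- minus_IZR. apply IZR_le. lia. } lra.
  - apply IZR_le; auto.
Qed.

Lemma split_ind (P : R -> R -> Prop) :
  (forall a b c, a <= b -> b <= c -> P a b -> P b c -> P a c) ->
  (forall a b, a < b -> intfree a b -> P a b) ->
  (forall a, P a a) ->
  forall a b, a <= b -> P a b.
Proof.
  intros HC HB HP.
  assert (Short : forall a b, a <= b <= a + 1 -> P a b).
  { intros a b [H1 H2]. destruct (Req_dec a b) as [E|E]. subst; apply HP.
    destruct (archimed a) as [A1 A2].
    destruct (Rlt_dec (IZR (up a)) b) as [L|L].
    - apply (HC a (IZR (up a)) b); try lra.
      + apply HB. lra. intros z Hz. assert (T := up_least a z (proj1 Hz)). lra.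
      + apply HB. lra. intros z Hz. assert (z <> up a) by (intro; subst; lra).
        assert (T := up_least a z ltac:(lra)). assert (IZR (up a) + 1 <= IZR z).
        { rewrite <- plus_IZR. apply IZR_le. assert (IZR (up a) < IZR z) by lra. apply lt_IZR in H0. lia. } lra.
    - apply HB. lra. intros z Hz. assert (T := up_least a z (proj1 Hz)). lra. }
  assert (Gen : forall N a b, a <= b <= a + INR N + 1 -> P a b).
  { induction N as [|N IH]; intros a b Hb.
    - apply Short. simpl in Hb. lra.
    - rewrite S_INR in Hb. destruct (Rle_dec b (a + 1)) as [L|L].
      + apply Short; lra.
      + apply (HC a (a + 1) b); try lra. apply Short; lra. apply IH. lra. }
  intros a b Hab. destruct (INR_unbounded (b - a)) as [N HN]. apply (Gen N). lra.
Qed.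

Lemma PC_ex_RInt f : PC f -> forall a b, ex_RInt f a b.
Proof.
  intros H.
  assert (K : forall a b, a <= b -> ex_RInt f a b).
  { apply split_ind.
    - intros a b c _ _ H1 H2. apply (ex_RInt_Chasles f a b c); auto.
    - intros a b Hab Hi. destruct (H a b Hab Hi) as [g [C E]].
      apply (ex_RInt_ext g). { intros x Hx. rewrite Rmin_left, Rmax_right in Hx by lra. symmetry; apply E; auto. }
      apply (ex_RInt_continuous (V:=R_CompleteNormedModule) g). intros; apply C.
    - intros a; apply ex_RInt_point. }
  intros a b. destruct (Rle_dec a b). apply K; auto. apply ex_RInt_swap. apply K. lra.
Qed.

Lemma cont_to_pt (f : R -> R) x : continuous f x -> continuity_pt f x.
Proof. intros H. apply continuity_pt_filterlim. exact H. Qed.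

Lemma RInt_cont_deriv (g : R -> R) a x : (forall y, continuous g y) -> is_derive (fun y => RInt g a y) x (g x).
Proof.
  intros C. apply (is_derive_RInt g (fun y => RInt g a y) a x).
  - apply filter_forall. intros y. apply (RInt_correct (V:=R_CompleteNormedModule)).
    apply (ex_RInt_continuous (V:=R_CompleteNormedModule) g). intros; apply C.
  - apply C.
Qed.

Lemma FTC_piece (F g : R -> R) a b : a < b -> (forall x, continuous g x) -> (forall x, continuous F x) ->
  (forall x, a < x < b -> is_derive F x (g x)) -> RInt g a b = F b - F a.
Proof.
  intros Hab Cg CF D.
  set (H := fun x => RInt g a x - F x).
  assert (HD : forall x, a < x < b -> derivable_pt_lim H x 0).
  { intros x Hx. apply is_derive_Reals. apply (isd_ext (fun y => RInt g a y - F y) H x (g x - g x) 0).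
    intros; reflexivity. ring. apply isd_minus. apply RInt_cont_deriv; auto. apply D; auto. }
  assert (pr : forall x, a < x < b -> derivable_pt H x).
  { intros x Hx. exists 0. apply HD; auto. }
  assert (HC : forall x, a <= x <= b -> continuity_pt H x).
  { intros x _. apply cont_to_pt. unfold H. apply cont_minus; auto.
    apply (ex_derive_continuous (K:=R_AbsRing) (V:=R_NormedModule) (fun y => RInt g a y)). exists (g x). apply RInt_cont_deriv; auto. }
  assert (Z := null_derivative_loc H a b pr HC).
  assert (Z2 : constant_D_eq H (fun x => a <= x <= b) (H a)).
  { apply Z. intros x P. apply derive_pt_eq_0. apply HD. auto. }
  assert (E := Z2 b ltac:(lra)). unfold H in E. rewrite RInt_point in E.
  simpl in E. unfold zero in E; simpl in E. lra.
Qed.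

Lemma FTC_pc (F f : R -> R) : (forall x, continuous F x) -> (forall x, nonint x -> is_derive F x (f x)) -> PC f ->
  forall a b, RInt f a b = F b - F a.
Proof.
  intros CF D Pf.
  assert (K : forall a b, a <= b -> RInt f a b = F b - F a).
  { apply split_ind.
    - intros a b c _ _ H1 H2. rewrite <- (RInt_Chasles f a b c) by apply PC_ex_RInt, Pf.
      rewrite H1, H2. simpl. unfold plus; simpl. ring.
    - intros a b Hab Hi. destruct (Pf a b Hab Hi) as [g [C E]].
      rewrite (RInt_ext f g). apply FTC_piece; auto.
      + intros x Hx. eapply isd_ext; [intros; reflexivity| |apply D]. apply E; auto.
        eapply intfree_nonint; eauto.
      + intros x Hx. rewrite Rmin_left, Rmax_right in Hx by lra. apply E; auto.
    - intros a. rewrite RInt_point. simpl. unfold zero; simpl. ring. }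
  intros a b. destruct (Rle_dec a b). apply K; auto.
  rewrite <- opp_RInt_swap by apply PC_ex_RInt, Pf. rewrite K by lra. simpl. unfold opp; simpl. ring.
Qed.

Lemma RI_chasles (f : R -> R) a b c : ex_RInt f a b -> ex_RInt f b c -> RInt f a b + RInt f b c = RInt f a c.
Proof. intros H1 H2. exact (RInt_Chasles f a b c H1 H2). Qed.
Lemma RI_plus (f g : R -> R) a b : ex_RInt f a b -> ex_RInt g a b -> RInt (fun x => f x + g x) a b = RInt f a b + RInt g a b.
Proof. intros H1 H2. exact (RInt_plus f g a b H1 H2). Qed.
Lemma RI_minus (f g : R -> R) a b : ex_RInt f a b -> ex_RInt g a b -> RInt (fun x => f x - g x) a b = RInt f a b - RInt g a b.
Proof. intros H1 H2. exact (RInt_minus f g a b H1 H2). Qed.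
Lemma RI_scal (f : R -> R) k a b : ex_RInt f a b -> RInt (fun x => k * f x) a b = k * RInt f a b.
Proof. intros H1. exact (RInt_scal f a b k H1). Qed.
Lemma RI_lin (f : R -> R) u v a b : ex_RInt f (u * a + v) (u * b + v) ->
  RInt (fun y => u * f (u * y + v)) a b = RInt f (u * a + v) (u * b + v).
Proof. intros H. exact (RInt_comp_lin f u v a b H). Qed.
Lemma RI_shift (f : R -> R) c a b : ex_RInt f (a + c) (b + c) ->
  RInt (fun y => f (y + c)) a b = RInt f (a + c) (b + c).
Proof.
  intros H. replace (a + c) with (1 * a + c) by ring. replace (b + c) with (1 * b + c) by ring.
  rewrite <- (RI_lin f 1 c a b). apply RInt_ext. intros; rewrite !Rmult_1_l; f_equal; ring.
  replace (1 * a + c) with (a + c) by ring. replace (1 * b + c) with (b + c) by ring. exact H.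
Qed.
Lemma RI_zero (f : R -> R) a b : (forall x, Rmin a b < x < Rmax a b -> f x = 0) -> RInt f a b = 0.
Proof.
  intros H. rewrite (RInt_ext f (fun _ => 0)) by exact H. rewrite RInt_const. simpl. unfold scal; simpl; unfold mult; simpl. ring.
Qed.
Lemma RI_ext (f g : R -> R) a b : (forall x, Rmin a b < x < Rmax a b -> f x = g x) -> RInt f a b = RInt g a b.
Proof. apply RInt_ext. Qed.

Lemma exc p a b : ex_RInt (cardB p) a b.
Proof. apply PC_ex_RInt, PC_cardB. Qed.

Lemma PC_cardB_sh p : PC (fun x => cardB p (x - 1)).
Proof. apply (PC_ext (fun x => cardB p (x + IZR (-1)))). intros; f_equal; simpl; ring. apply PC_shift, PC_cardB. Qed.

Theorem cardB_int (b : nat) (t : R) : cardB (S b) t = RInt (cardB b) (t - 1) t.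
Proof.
  assert (F := FTC_pc (cardB (S b)) (fun x => cardB b x - cardB b (x - 1)) (cardB_cont b) (fun x H => D_nonint b x H)
     (PC_minus _ _ (PC_cardB b) (PC_cardB_sh b)) (-1) t).
  rewrite (cardB_neg (S b) (-1)) in F by lra.
  rewrite RI_minus in F; [|apply exc|apply PC_ex_RInt, PC_cardB_sh].
  rewrite (RI_shift (cardB b) (-1)) in F by apply exc.
  rewrite <- (RI_chasles (cardB b) (-1) (t - 1) t) in F by apply exc.
  rewrite <- (RI_chasles (cardB b) (-1 + -1) (-1) (t + -1)) in F by apply exc.
  rewrite (RI_zero (cardB b) (-1 + -1) (-1)) in F.
  - replace (t + -1) with (t - 1) in F by ring. lra.
  - intros x Hx. rewrite Rmin_left, Rmax_right in Hx by lra. apply cardB_neg. lra.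
Qed.

Theorem cardB_deriv (b : nat) (t : R) : is_derive (cardB (S (S b))) t (cardB (S b) t - cardB (S b) (t - 1)).
Proof.
  apply (isd_ext (fun y => RInt (cardB (S b)) 0 y - RInt (cardB (S b)) 0 (y + -1)) _ t (cardB (S b) t - cardB (S b) (t + -1))).
  - intros y. rewrite cardB_int. rewrite <- (RI_chasles (cardB (S b)) 0 (y - 1) y) by apply exc.
    replace (y + -1) with (y - 1) by ring. ring.
  - replace (t + -1) with (t - 1) by ring. reflexivity.
  - apply isd_minus. apply RInt_cont_deriv. apply cardB_cont.
    apply (isd_shift (fun y => RInt (cardB (S b)) 0 y)). apply RInt_cont_deriv. apply cardB_cont.
Qed.

Ltac rring := match goal with |- ?x = ?y => change (@eq R x y) end; ring.

Fixpoint Dl (q r : nat) (t : R) : R :=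
  match r with O => cardB q t | S r' => Dl q r' t - Dl q r' (t - 1) end.

Lemma Dl_neg q r t : t < 0 -> Dl q r t = 0.
Proof. revert t; induction r; intros t H; simpl. apply cardB_neg; auto. rewrite !IHr by lra. ring. Qed.

Lemma Dl_big q r t : INR (q + r) + 1 <= t -> Dl q r t = 0.
Proof.
  revert t; induction r; intros t H; simpl.
  - apply cardB_big. rewrite Nat.add_0_r in H. auto.
  - rewrite Nat.add_succ_r, S_INR in H. rewrite !IHr by lra. ring.
Qed.

Lemma PC_Dl q r : PC (Dl q r).
Proof.
  induction r; simpl. apply PC_cardB.
  apply PC_minus; auto. apply (PC_ext (fun x => Dl q r (x + IZR (-1)))). intros; f_equal; simpl; ring.
  apply PC_shift; auto.
Qed.

Lemma Dl_cont q r t : continuous (Dl (S q) r) t.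
Proof.
  revert t; induction r; intros t; simpl. apply cardB_cont.
  apply cont_minus; auto. apply (cont_ext (fun y => Dl (S q) r (y + -1))). intros; f_equal; ring.
  apply cont_shift; auto.
Qed.

Lemma Dl_deriv q r t : is_derive (Dl (S (S q)) r) t (Dl (S q) (S r) t).
Proof.
  revert t; induction r; intros t.
  - exact (cardB_deriv q t).
  - change (Dl (S q) (S (S r)) t) with (Dl (S q) (S r) t - Dl (S q) (S r) (t - 1)).
    simpl Dl at 1. apply isd_minus. apply IHr.
    apply (isd_ext (fun y => Dl (S (S q)) r (y + -1)) _ t (Dl (S q) (S r) (t + -1))). intros; f_equal; ring. f_equal; ring.
    apply isd_shift. apply IHr.
Qed.

Lemma Dl_deriv1 r t : nonint t -> is_derive (Dl 1 r) t (Dl 0 (S r) t).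
Proof.
  revert t; induction r; intros t Ht.
  - exact (D_nonint 0 t Ht).
  - change (Dl 0 (S (S r)) t) with (Dl 0 (S r) t - Dl 0 (S r) (t - 1)).
    simpl Dl at 1. apply isd_minus. apply IHr; auto.
    apply (isd_ext (fun y => Dl 1 r (y + -1)) _ t (Dl 0 (S r) (t + -1))). intros; f_equal; ring. f_equal; ring.
    apply isd_shift. apply IHr. replace (t + -1) with (t - 1) by ring. apply nonint_m1; auto.
Qed.

Definition RL (F : R -> R) (t S : R) := exists d, 0 < d /\ forall h, 0 < h < d -> F (t + h) = F t + h * S.

Lemma RL_minus F G t S T : RL F t S -> RL G t T -> RL (fun y => F y - G y) t (S - T).
Proof.
  intros [d1 [P1 H1]] [d2 [P2 H2]]. exists (Rmin d1 d2). split. apply Rmin_glb_lt; auto.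
  intros h Hh. assert (Rmin d1 d2 <= d1) by apply Rmin_l. assert (Rmin d1 d2 <= d2) by apply Rmin_r.
  rewrite H1, H2 by lra. ring.
Qed.

Lemma RL_shift F t S c : RL F (t + c) S -> RL (fun y => F (y + c)) t S.
Proof.
  intros [d [P H]]. exists d. split; auto. intros h Hh. replace (t + h + c) with (t + c + h) by ring. apply H; auto.
Qed.

Lemma RL_cardB1 t : RL (cardB 1) t (cardB 0 t - cardB 0 (t - 1)).
Proof.
  rewrite !cardB0_val.
  destruct (Rlt_dec t 0) as [A|A]; [|destruct (Rlt_dec t 1) as [B|B]; [|destruct (Rlt_dec t 2) as [C|C]]].
  - exists (-t). split. lra. intros h Hh. rewrite !cardB1_formula.
    destruct (Rle_dec 0 t); destruct (Rle_dec 0 (t - 1)); try lra.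
    unfold Rabs; repeat destruct Rcase_abs; lra.
  - exists (1 - t). split. lra. intros h Hh. rewrite !cardB1_formula.
    destruct (Rle_dec 0 t); destruct (Rle_dec 0 (t - 1)); try lra; destruct (Rlt_dec t 1); try lra;
    unfold Rabs; repeat destruct Rcase_abs; lra.
  - exists (2 - t). split. lra. intros h Hh. rewrite !cardB1_formula.
    destruct (Rle_dec 0 t); destruct (Rle_dec 0 (t - 1)); try lra; destruct (Rlt_dec t 1); try lra;
    destruct (Rlt_dec (t - 1) 1); try lra; unfold Rabs; repeat destruct Rcase_abs; lra.
  - exists 1. split. lra. intros h Hh. rewrite !cardB1_formula.
    destruct (Rle_dec 0 t); destruct (Rle_dec 0 (t - 1)); try lra; destruct (Rlt_dec t 1); try lra;
    destruct (Rlt_dec (t - 1) 1); try lra; unfold Rabs; repeat destruct Rcase_abs; lra.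
Qed.

Lemma RL_Dl1 r t : RL (Dl 1 r) t (Dl 0 (S r) t).
Proof.
  revert t; induction r; intros t.
  - exact (RL_cardB1 t).
  - change (Dl 0 (S (S r)) t) with (Dl 0 (S r) t - Dl 0 (S r) (t - 1)).
    simpl Dl at 1. apply RL_minus. apply IHr.
    assert (H := RL_shift (Dl 1 r) t _ (-1) (IHr (t + -1))).
    destruct H as [d [P H]]. exists d. split; [exact P|]. intros h Hh.
    cbv beta. replace (t + h - 1) with (t + h + -1) by ring. replace (t - 1) with (t + -1) by ring. apply H; auto.
Qed.

Lemma RL_Derive F t S : RL F t S -> Derive F t = S.
Proof.
  intros [d [P H]]. unfold Derive, Lim. simpl.
  rewrite (Lim_seq_ext_loc _ (fun _ => S)).
  - rewrite Lim_seq_const. reflexivity.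
  - destruct (INR_unbounded (/ d)) as [N HN]. exists N. intros k Hk.
    assert (0 < / (INR k + 1)) by (apply Rinv_0_lt_compat; pose proof (pos_INR k); lra).
    assert (/ (INR k + 1) < d).
    { apply le_INR in Hk. rewrite <- (Rinv_inv d). apply Rinv_lt_contravar.
      apply Rmult_lt_0_compat. apply Rinv_0_lt_compat; lra. pose proof (pos_INR k); lra. lra. }
    rewrite H by lra. field. pose proof (pos_INR k). lra.
Qed.

Lemma cardB_sym1 p t : cardB (S p) (INR (S p) + 1 - t) = cardB (S p) t.
Proof.
  revert t; induction p; intros t.
  - rewrite !cardB1_formula. simpl INR. replace (1 + 1 - t - 1) with (- (t - 1)) by ring. rewrite Rabs_Ropp. reflexivity.
  - rewrite !(cardB_S (S p)). specialize (IHp (t - 1)) as E1. specialize (IHp t) as E2. rewrite !S_INR in *.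
    replace (INR p + 1 + 1 + 1 - t - 1) with (INR p + 1 + 1 - t) by ring.
    replace (INR p + 1 + 1 + 1 - t) with (INR p + 1 + 1 - (t - 1)) by ring.
    rewrite E1, E2. field. pose proof (pos_INR p). lra.
Qed.

Lemma cardB_sym0 t : nonint t -> cardB 0 (1 - t) = cardB 0 t.
Proof.
  intros H. assert (H0 := H 0%Z). assert (H1 := H 1%Z). simpl in H0, H1.
  rewrite !cardB0_val. destruct (Rle_dec 0 t); destruct (Rle_dec 0 (1 - t)); destruct (Rlt_dec t 1);
  destruct (Rlt_dec (1 - t) 1); try reflexivity; lra.
Qed.

Lemma cardB_sym p t : (1 <= p)%nat \/ nonint t -> cardB p (INR p + 1 - t) = cardB p t.
Proof.
  intros [H|H]. destruct p. lia. apply cardB_sym1.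
  destruct p. simpl INR. replace (0 + 1 - t) with (1 - t) by ring. apply cardB_sym0; auto. apply cardB_sym1.
Qed.

Lemma Dl_sym q r t : (1 <= q)%nat \/ nonint t -> Dl q r (INR (q + r) + 1 - t) = (-1) ^ r * Dl q r t.
Proof.
  revert t; induction r; intros t H.
  - simpl. rewrite Nat.add_0_r. rewrite cardB_sym; auto. ring.
  - simpl Dl. rewrite Nat.add_succ_r, S_INR.
    replace (INR (q + r) + 1 + 1 - t - 1) with (INR (q + r) + 1 - t) by ring.
    replace (INR (q + r) + 1 + 1 - t) with (INR (q + r) + 1 - (t - 1)) by ring.
    rewrite !IHr. simpl. ring. all: destruct H; [left; auto | right; auto using nonint_m1].
Qed.

Lemma Derive_n_cardB m k t : (k < m)%nat -> Derive_n (cardB m) k t = Dl (m - k) k t.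
Proof.
  revert t; induction k; intros t H.
  - simpl. rewrite Nat.sub_0_r. reflexivity.
  - simpl Derive_n. rewrite (Derive_ext _ (Dl (m - k) k)).
    2: { intros; apply IHk; lia. }
    destruct (m - k)%nat as [|q] eqn:E. lia. destruct q as [|q]. lia.
    replace (m - S k)%nat with (S q) by lia. apply is_derive_unique. apply Dl_deriv.
Qed.

Definition Gst (a b u v : nat) := forall (s : Z) lo hi, lo <= 0 -> INR (a + u) + 1 <= hi ->
  RInt (fun x => Dl a u x * Dl b v (x + IZR s)) lo hi = (-1) ^ u * Dl (a + b + 1) (u + v) (INR (a + u) + 1 + IZR s).

Lemma PC_prod a u b v (s : R) (z : Z) : s = IZR z -> PC (fun x => Dl a u x * Dl b v (x + s)).
Proof. intros ->. apply PC_mult. apply PC_Dl. apply PC_shift, PC_Dl. Qed.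

Lemma ex_prod a u b v (z : Z) lo hi : ex_RInt (fun x => Dl a u x * Dl b v (x + IZR z)) lo hi.
Proof. apply PC_ex_RInt. apply (PC_prod a u b v _ z); auto. Qed.

Lemma Gext (a : nat) : (forall b, Gst a b 0 0) -> forall b u v, Gst a b u v.
Proof.
  intros H0 b u. induction u as [|u IHu]; intros v.
  - induction v as [|w IHv]. apply H0.
    intros s lo hi Hlo Hhi.
    simpl Dl at 2. simpl Dl at 3.
    rewrite (RI_ext _ (fun x => Dl a 0 x * Dl b w (x + IZR s) - Dl a 0 x * Dl b w (x + IZR (s - 1)))).
    2: { intros x _. rewrite minus_IZR. simpl. replace (x + (IZR s - 1)) with (x + IZR s - 1) by ring. ring. }
    rewrite RI_minus by apply ex_prod.
    rewrite (IHv s), (IHv (s - 1)%Z) by auto. rewrite minus_IZR. simpl.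
    replace (INR (a + 0) + 1 + (IZR s - 1)) with (INR (a + 0) + 1 + IZR s - 1) by ring. ring.
  - intros s lo hi Hlo Hhi.
    simpl Dl at 1.
    rewrite (RI_ext _ (fun x => Dl a u x * Dl b v (x + IZR s) - (fun y => Dl a u y * Dl b v (y + IZR (s + 1))) (x + -1))).
    2: { intros x _. rewrite plus_IZR. simpl. replace (x + -1 + (IZR s + 1)) with (x + IZR s) by ring.
         replace (x + -1) with (x - 1) by ring. ring. }
    rewrite RI_minus; [| apply ex_prod |].
    2: { apply PC_ex_RInt. apply (PC_ext (fun x => Dl a u (x + IZR (-1)) * Dl b v (x + IZR (-1) + IZR (s + 1)))).
         intros; reflexivity.
         apply (PC_shift (fun y => Dl a u y * Dl b v (y + IZR (s+1))) (-1)). apply (PC_prod a u b v _ (s + 1)); auto. }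
    rewrite (RI_shift (fun y => Dl a u y * Dl b v (y + IZR (s + 1))) (-1)) by apply ex_prod.
    rewrite Nat.add_succ_r, S_INR in Hhi.
    rewrite (IHu v s), (IHu v (s + 1)%Z) by lra.
    rewrite plus_IZR. replace (a + S u)%nat with (S (a + u)) by lia. rewrite S_INR.
    change (S u + v)%nat with (S (u + v)). cbn [Dl pow].
    replace (INR (a + u) + 1 + 1 + IZR s - 1) with (INR (a + u) + 1 + IZR s) by ring.
    replace (INR (a + u) + 1 + (IZR s + 1)) with (INR (a + u) + 1 + 1 + IZR s) by ring. match goal with |- ?x = ?y => change (@eq R x y) end; ring.
Qed.

Lemma G00_base b : Gst 0 b 0 0.
Proof.
  intros s lo hi Hlo Hhi. simpl in Hhi.
  change (RInt (fun x => cardB 0 x * cardB b (x + IZR s)) lo hi = (-1)^0 * cardB (0 + b + 1) (INR (0+0) + 1 + IZR s)).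
  replace (0 + b + 1)%nat with (S b) by lia. rewrite cardB_int.
  rewrite <- (RI_chasles _ lo 0 hi) by apply (ex_prod 0 0 b 0).
  rewrite <- (RI_chasles _ 0 1 hi) by apply (ex_prod 0 0 b 0).
  rewrite (RI_zero _ lo 0). 2: { intros x Hx. rewrite Rmin_left, Rmax_right in Hx by lra. rewrite cardB_neg by lra. ring. }
  rewrite (RI_zero _ 1 hi). 2: { intros x Hx. rewrite Rmin_left, Rmax_right in Hx by lra. rewrite (cardB_big 0) by (simpl; lra). ring. }
  rewrite (RI_ext _ (fun x => cardB b (x + IZR s))).
  2: { intros x Hx. rewrite Rmin_left, Rmax_right in Hx by lra. rewrite cardB0_val.
       destruct (Rle_dec 0 x); [|lra]. destruct (Rlt_dec x 1); [|lra]. ring. }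
  rewrite RI_shift by apply exc. simpl INR. replace (0 + 1 + IZR s - 1) with (0 + IZR s) by ring.
  replace (1 + IZR s) with (0 + 1 + IZR s) by ring. match goal with |- ?x = ?y => change (@eq R x y) end; ring.
Qed.

Lemma G00_step a : (forall b, Gst a b 0 0) -> forall b, Gst (S a) b 0 0.
Proof.
  intros H0 b. assert (Gx := Gext a H0).
  intros s0 lo hi Hlo Hhi. rewrite Nat.add_0_r, S_INR in Hhi.
  set (L := fun s : Z => RInt (fun x => Dl (S a) 0 x * Dl b 0 (x + IZR s)) lo hi).
  set (Rr := fun s : Z => (-1) ^ 0 * Dl (S a + b + 1) (0 + 0) (INR (S a + 0) + 1 + IZR s)).
  change (L s0 = Rr s0).
  assert (Step : forall s, L s - L (s + 1)%Z = Rr s - Rr (s + 1)%Z).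
  { intros s.
    set (F := fun x => cardB (S a) x * cardB (S b) (x + IZR (s + 1))).
    set (f := fun x => Dl a 1 x * Dl (S b) 0 (x + IZR (s + 1)) +
                     (Dl (S a) 0 x * Dl b 0 (x + IZR (s + 1)) - Dl (S a) 0 x * Dl b 0 (x + IZR s))).
    assert (FT := FTC_pc F f).
    assert (E : RInt f lo hi = F hi - F lo).
    { apply FT.
      - intros x. unfold F. apply cont_mult. apply cardB_cont. apply cont_shift, cardB_cont.
      - intros x Hx. unfold F, f.
        apply (isd_ext (fun y => cardB (S a) y * cardB (S b) (y + IZR (s + 1))) _ x
          ((cardB a x - cardB a (x - 1)) * cardB (S b) (x + IZR (s + 1)) +
           cardB (S a) x * (cardB b (x + IZR (s + 1)) - cardB b (x + IZR (s + 1) - 1)))).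
        intros; reflexivity.
        cbn [Dl]. rewrite plus_IZR. replace (x + (IZR s + 1) - 1) with (x + IZR s) by ring. ring.
        apply (isd_mult (cardB (S a)) (fun y => cardB (S b) (y + IZR (s + 1)))). apply D_nonint; auto. apply isd_shift. apply D_nonint. apply nonint_shift; auto.
      - unfold f. apply PC_plus. apply (PC_prod a 1 (S b) 0 _ (s + 1)); auto.
        apply PC_minus. apply (PC_prod (S a) 0 b 0 _ (s + 1)); auto. apply (PC_prod (S a) 0 b 0 _ s); auto. }
    unfold f in E. rewrite RI_plus in E; [|apply ex_prod|].
    2: { apply PC_ex_RInt. apply PC_minus. apply (PC_prod (S a) 0 b 0 _ (s + 1)); auto. apply (PC_prod (S a) 0 b 0 _ s); auto. }
    rewrite RI_minus in E by apply ex_prod.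
    rewrite (Gx (S b) 1%nat 0%nat (s + 1)%Z lo hi Hlo) in E by (rewrite Nat.add_1_r, S_INR; lra).
    unfold F in E. rewrite (cardB_big (S a) hi) in E by (rewrite S_INR; lra).
    assert (cardB (S a) lo = 0).
    { destruct (Rlt_dec lo 0). apply cardB_neg; auto. replace lo with 0 by lra. apply cardB_0. lia. }
    rewrite H in E. unfold L, Rr.
    replace (a + S b + 1)%nat with (S a + b + 1)%nat in E by lia.
    set (c := (S a + b + 1)%nat) in *.
    replace (a + 1)%nat with (S a) in E by lia. replace (S a + 0)%nat with (S a) by lia.
    rewrite S_INR in *. change (1 + 0)%nat with 1%nat in E. change (0 + 0)%nat with 0%nat.
    cbn [Dl pow] in E |- *. rewrite plus_IZR in *.
    replace (INR a + 1 + 1 + (IZR s + 1) - 1) with (INR a + 1 + 1 + IZR s) in E by ring. lra. }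
  assert (Zero : forall s, INR b + 1 <= IZR s -> L s = Rr s).
  { intros s Hs. unfold L, Rr. rewrite RI_zero.
    - rewrite Dl_big. rring. rewrite !plus_INR. rewrite !S_INR. simpl INR. lra.
    - intros x Hx. cbn [Dl]. destruct (Rle_dec x 0).
      + destruct (Rlt_dec x 0). rewrite cardB_neg by auto. ring. replace x with 0 by lra. rewrite cardB_0 by lia. ring.
      + rewrite (cardB_big b) by lra. ring. }
  assert (Per : forall (K : nat) s, L s - Rr s = L (s + Z.of_nat K)%Z - Rr (s + Z.of_nat K)%Z).
  { induction K; intros s. simpl. rewrite Z.add_0_r. reflexivity.
    rewrite IHK. rewrite Nat2Z.inj_succ. replace (s + Z.succ (Z.of_nat K))%Z with ((s + Z.of_nat K) + 1)%Z by lia.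
    specialize (Step (s + Z.of_nat K)%Z). lra. }
  destruct (INR_unbounded (INR b + 1 - IZR s0)) as [K HK].
  specialize (Per K s0). rewrite (Zero (s0 + Z.of_nat K)%Z) in Per. lra.
  rewrite plus_IZR. rewrite <- INR_IZR_INZ. lra.
Qed.

Theorem Gmain a b u v : Gst a b u v.
Proof.
  revert b u v. apply Gext. induction a. apply G00_base. apply G00_step. intros; apply IHa.
Qed.

Lemma Series_two (u : nat -> R) : (forall k, (2 <= k)%nat -> u k = 0) -> Series u = u 0%nat + u 1%nat.
Proof.
  intros H. unfold Series.
  assert (E : forall N, (1 <= N)%nat -> sum_n u N = u 0%nat + u 1%nat).
  { induction N; intros HN. lia. destruct N. rewrite sum_Sn, sum_O. reflexivity.
    rewrite sum_Sn, IHN by lia. rewrite (H (S (S N))) by lia. simpl. unfold plus; simpl. ring. }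
  rewrite (Lim_seq_ext_loc _ (fun _ => u 0%nat + u 1%nat)).
  rewrite Lim_seq_const. reflexivity. exists 1%nat. intros; apply E; auto.
Qed.

Lemma RL_plus F G t S T : RL F t S -> RL G t T -> RL (fun y => F y + G y) t (S + T).
Proof.
  intros [d1 [P1 H1]] [d2 [P2 H2]]. exists (Rmin d1 d2). split. apply Rmin_glb_lt; auto.
  intros h Hh. assert (Rmin d1 d2 <= d1) by apply Rmin_l. assert (Rmin d1 d2 <= d2) by apply Rmin_r.
  rewrite H1, H2 by lra. ring.
Qed.
Lemma RL_scal F t S k : RL F t S -> RL (fun y => k * F y) t (k * S).
Proof. intros [d [P H]]. exists d. split; auto. intros h Hh. rewrite H by auto. ring. Qed.
Lemma RL_lin F x S a b : 0 < a -> RL F (a * x + b) S -> RL (fun y => F (a * y + b)) x (a * S).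
Proof.
  intros Ha [d [P H]]. exists (d / a). split. apply Rdiv_lt_0_compat; auto.
  intros h Hh. replace (a * (x + h) + b) with (a * x + b + a * h) by ring. rewrite H. ring.
  split. apply Rmult_lt_0_compat; lra. destruct Hh as [_ Hh]. apply (Rmult_lt_compat_l a) in Hh; auto.
  replace (a * (d / a)) with d in Hh by (field; lra). exact Hh.
Qed.

Definition G3 (p : nat) (nn b1 b2 b3 : R) (y : R) :=
  cardB p (nn * y + b1) + cardB p (nn * y + b2) + cardB p (nn * y + b3).

Lemma Dn_G3 p nn b1 b2 b3 k x : 0 < nn -> (k <= p)%nat ->
  Derive_n (G3 p nn b1 b2 b3) k x =
  nn ^ k * (Dl (p - k) k (nn * x + b1) + Dl (p - k) k (nn * x + b2) + Dl (p - k) k (nn * x + b3)).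
Proof.
  intros Hn. revert x; induction k; intros x Hk.
  - simpl. rewrite Nat.sub_0_r. unfold G3. ring.
  - simpl Derive_n. rewrite (Derive_ext _ (fun y => nn ^ k * (Dl (p - k) k (nn * y + b1) + Dl (p - k) k (nn * y + b2) + Dl (p - k) k (nn * y + b3)))).
    2: { intros; apply IHk; lia. }
    destruct (p - k)%nat as [|q] eqn:E. lia.
    destruct q as [|q].
    + replace (p - S k)%nat with 0%nat by lia. apply RL_Derive.
      replace (nn ^ S k * (Dl 0 (S k) (nn * x + b1) + Dl 0 (S k) (nn * x + b2) + Dl 0 (S k) (nn * x + b3)))
        with (nn ^ k * (nn * Dl 0 (S k) (nn * x + b1) + nn * Dl 0 (S k) (nn * x + b2) + nn * Dl 0 (S k) (nn * x + b3))) by (simpl; ring).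
      apply RL_scal. apply RL_plus. apply RL_plus.
      all: apply (RL_lin (Dl 1 k)); auto; apply RL_Dl1.
    + replace (p - S k)%nat with (S q) by lia. apply is_derive_unique.
      apply (isd_ext (fun y => nn ^ k * (Dl (S (S q)) k (nn * y + b1) + Dl (S (S q)) k (nn * y + b2) + Dl (S (S q)) k (nn * y + b3)))
        _ x (nn ^ k * (nn * Dl (S q) (S k) (nn * x + b1) + nn * Dl (S q) (S k) (nn * x + b2) + nn * Dl (S q) (S k) (nn * x + b3)))).
      intros; reflexivity. simpl; ring.
      apply isd_scal. apply isd_plus. apply isd_plus.
      all: apply (isd_lin (Dl (S (S q)) k)); apply Dl_deriv.
Qed.

Section NB.
Variables (p n i : nat).
Hypothesis Hi : (1 <= i <= n)%nat.
Hypothesis Hn : (p + 1 <= n)%nat.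

Let a := INR i - 1/2.
Let bb1 := - a + (INR p + 1) / 2.
Let bb2 := a + (INR p + 1) / 2.
Let bb3 := a - 2 * INR n + (INR p + 1) / 2.

Lemma facts : 1/2 <= a /\ a <= INR n - 1/2 /\ INR p + 1 <= INR n.
Proof.
  unfold a. destruct Hi as [H1 H2]. apply le_INR in H1. apply le_INR in H2. apply le_INR in Hn.
  rewrite plus_INR in Hn. simpl in *. lra.
Qed.

Lemma Cc_zero c x : (INR n * x - c + (INR p + 1) / 2 < 0 \/ INR p + 1 <= INR n * x - c + (INR p + 1) / 2) ->
  Cc p n c x = 0.
Proof. intros [H|H]; unfold Cc. apply cardB_neg; auto. apply cardB_big; auto. Qed.

Lemma NeuB_loc x : -1 / 2 < INR n * x < INR n + 1 / 2 -> NeuB p n i x = G3 p (INR n) bb1 bb2 bb3 x.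
Proof.
  intros Hx. destruct facts as [F1 [F2 F3]]. pose proof (pos_INR p).
  unfold NeuB, sumZ. fold a.
  rewrite Series_two.
  2: { intros k Hk. apply le_INR in Hk. rewrite <- INR_IZR_INZ. simpl in Hk.
       assert (INR k * INR n >= 2 * INR n) by nra.
       rewrite !Cc_zero. ring. left. nra. left. nra. }
  rewrite (Series_two (fun k => _)).
  2: { intros k Hk. apply le_INR in Hk. rewrite minus_IZR, opp_IZR, <- INR_IZR_INZ.
       simpl in Hk. assert (INR k * INR n >= 2 * INR n) by nra. rewrite !Cc_zero. ring. right. nra. right. nra. }
  replace (- Z.of_nat 0 - 1)%Z with (-1)%Z by lia. replace (- Z.of_nat 1 - 1)%Z with (-2)%Z by lia.
  simpl Z.of_nat. rewrite (Cc_zero (INR i - 1/2 + 2 * IZR 1 * INR n)) by (left; simpl; fold a; nra).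
  rewrite (Cc_zero (INR i - 1/2 + 2 * IZR (-1) * INR n)) by (right; simpl; fold a; nra).
  rewrite (Cc_zero (-(INR i - 1/2) + 2 * IZR (-1) * INR n)) by (right; simpl; fold a; nra).
  rewrite (Cc_zero (INR i - 1/2 + 2 * IZR (-2) * INR n)) by (right; simpl; fold a; nra).
  rewrite (Cc_zero (-(INR i - 1/2) + 2 * IZR (-2) * INR n)) by (right; simpl; fold a; nra).
  unfold G3, Cc, bb1, bb2, bb3. fold a. simpl IZR.
  replace (INR n * x - (a + 2 * 0 * INR n) + (INR p + 1) / 2) with (INR n * x + (- a + (INR p + 1) / 2)) by ring.
  replace (INR n * x - (- a + 2 * 0 * INR n) + (INR p + 1) / 2) with (INR n * x + (a + (INR p + 1) / 2)) by ring.
  replace (INR n * x - (- a + 2 * 1 * INR n) + (INR p + 1) / 2) with (INR n * x + (a - 2 * INR n + (INR p + 1) / 2)) by ring.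
  ring.
Qed.

Lemma Dn_NeuB k x : (k <= p)%nat -> 0 <= x <= 1 ->
  Derive_n (NeuB p n i) k x =
  INR n ^ k * (Dl (p - k) k (INR n * x + bb1) + Dl (p - k) k (INR n * x + bb2) + Dl (p - k) k (INR n * x + bb3)).
Proof.
  intros Hk Hx. destruct facts as [F1 [F2 F3]]. pose proof (pos_INR p).
  rewrite <- Dn_G3 by (auto; lra).
  apply Derive_n_ext_loc. apply (loc_of_delta x (/ (2 * INR n))).
  { apply Rinv_0_lt_compat. lra. }
  intros y Hy. apply NeuB_loc. apply Rabs_def2 in Hy.
  assert (INR n * (y - x) < 1/2 /\ - (1/2) < INR n * (y - x)).
  { destruct Hy as [Y1 Y2]. split.
    - apply (Rmult_lt_compat_l (INR n)) in Y1; [|lra]. replace (INR n * / (2 * INR n)) with (1/2) in Y1 by (field; lra). lra.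
    - apply (Rmult_lt_compat_l (INR n)) in Y2; [|lra]. replace (INR n * - / (2 * INR n)) with (- (1/2)) in Y2 by (field; lra). lra. }
  nra.
Qed.
End NB.

Lemma PC_refl G (z : Z) : PC G -> PC (fun y => G (IZR z - y)).
Proof.
  intros H a b Hab Hi. destruct (H (IZR z - b) (IZR z - a)) as [g [C E]].
  - lra.
  - intros w Hw. apply (Hi (z - w)%Z). rewrite minus_IZR. lra.
  - exists (fun y => g (-1 * y + IZR z)). split.
    + intros x. apply cont_lin. apply C.
    + intros x Hx. replace (-1 * x + IZR z) with (IZR z - x) by ring. apply E. lra.
Qed.

Lemma RInt_ae F H a b : PC F -> PC H -> (forall y, nonint y -> F y = H y) -> RInt F a b = RInt H a b.
Proof.
  intros PF PH E.
  assert (K : forall a b, a <= b -> RInt F a b = RInt H a b).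
  { apply split_ind.
    - intros x y z _ _ H1 H2. rewrite <- (RI_chasles F x y z) by apply PC_ex_RInt, PF.
      rewrite <- (RI_chasles H x y z) by apply PC_ex_RInt, PH. rewrite H1, H2. reflexivity.
    - intros x y Hxy Hi. apply RI_ext. intros w Hw. rewrite Rmin_left, Rmax_right in Hw by lra.
      apply E. eapply intfree_nonint; eauto.
    - intros x. rewrite !RInt_point. reflexivity. }
  destruct (Rle_dec a b). apply K; auto.
  rewrite <- (opp_RInt_swap F) by apply PC_ex_RInt, PF. rewrite <- (opp_RInt_swap H) by apply PC_ex_RInt, PH.
  rewrite K by lra. reflexivity.
Qed.

Lemma refl_int F G (c : Z) a b : PC F -> PC G -> (forall y, nonint y -> F y = G (IZR c - y)) ->
  RInt F a b = RInt G (IZR c - b) (IZR c - a).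
Proof.
  intros PF PG E. rewrite (RInt_ae F (fun y => G (IZR c - y))); auto. 2: apply PC_refl; auto.
  assert (L := RI_lin G (-1) (IZR c) a b). rewrite <- (opp_RInt_swap G (IZR c - a) (IZR c - b)) by apply PC_ex_RInt, PG.
  replace (-1 * a + IZR c) with (IZR c - a) in L by ring. replace (-1 * b + IZR c) with (IZR c - b) in L by ring.
  rewrite <- L by apply PC_ex_RInt, PG.
  rewrite (RI_ext (fun y => -1 * G (-1 * y + IZR c)) (fun y => -1 * G (IZR c - y))). 2: { intros; replace (-1 * x + IZR c) with (IZR c - x) by ring; reflexivity. }
  rewrite RI_scal. simpl. unfold opp; simpl. lra.
  apply PC_ex_RInt. apply PC_refl; auto.
Qed.

Section F.
Variables q r : nat.

Definition fs (s : R) (y : R) := Dl q r (y - s).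

Lemma PC_fs (s t : Z) : PC (fun y => fs (IZR s) y * fs (IZR t) y).
Proof.
  unfold fs. apply PC_mult.
  - apply (PC_ext (fun y => Dl q r (y + IZR (- s)))). intros; rewrite opp_IZR; f_equal; ring. apply PC_shift, PC_Dl.
  - apply (PC_ext (fun y => Dl q r (y + IZR (- t)))). intros; rewrite opp_IZR; f_equal; ring. apply PC_shift, PC_Dl.
Qed.

Lemma reflect_fs (c s : Z) y : nonint y ->
  fs (IZR c - INR (q + r) - 1 - IZR s) y = (-1) ^ r * fs (IZR s) (IZR c - y).
Proof.
  intros Hy. unfold fs. rewrite <- (Dl_sym q r (IZR c - y - IZR s)).
  - f_equal. ring.
  - right. intros w E. apply (Hy (c - s - w)%Z). rewrite !minus_IZR. lra.
Qed.

Definition Gval (z : R) := (-1) ^ r * Dl (q + q + 1) (r + r) (INR (q + r) + 1 + z).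

Lemma Gfull (z : Z) lo hi : lo <= hi -> (lo <= 0 \/ lo <= - IZR z) -> (INR (q + r) + 1 <= hi \/ INR (q + r) + 1 - IZR z <= hi) ->
  RInt (fun x => Dl q r x * Dl q r (x + IZR z)) lo hi = Gval (IZR z).
Proof.
  intros Hlh Hlo Hhi.
  set (h := fun x => Dl q r x * Dl q r (x + IZR z)).
  assert (Ph : PC h). { unfold h. apply PC_mult. apply PC_Dl. apply PC_shift, PC_Dl. }
  assert (M := Gmain q q r r z (Rmin lo 0) (Rmax hi (INR (q + r) + 1)) (Rmin_r _ _) (Rmax_r _ _)).
  fold h in M. unfold Gval. rewrite <- M.
  rewrite <- (RI_chasles h (Rmin lo 0) lo) by apply PC_ex_RInt, Ph.
  rewrite <- (RI_chasles h lo hi (Rmax hi (INR (q + r) + 1))) by apply PC_ex_RInt, Ph.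
  rewrite (RI_zero h (Rmin lo 0) lo). rewrite (RI_zero h hi (Rmax hi (INR (q + r) + 1))). lra.
  - intros x Hx. assert (hi <= Rmax hi (INR (q + r) + 1)) by apply Rmax_l.
    rewrite Rmin_left, Rmax_right in Hx by lra. unfold h. destruct Hhi as [Hh|Hh].
    + rewrite Rmax_left in Hx by lra. lra.
    + rewrite (Dl_big q r (x + IZR z)). ring. lra.
  - intros x Hx. assert (Rmin lo 0 <= lo) by apply Rmin_l.
    rewrite Rmin_left, Rmax_right in Hx by lra. unfold h. destruct Hlo as [Hl|Hl].
    + rewrite Rmin_left in Hx by lra. lra.
    + rewrite (Dl_neg q r (x + IZR z)). ring. lra.
Qed.

Lemma Ifull (s t : Z) a1 b1 : a1 <= b1 -> (a1 <= IZR s \/ a1 <= IZR t) ->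
  (IZR s + INR (q + r) + 1 <= b1 \/ IZR t + INR (q + r) + 1 <= b1) ->
  RInt (fun y => fs (IZR s) y * fs (IZR t) y) a1 b1 = Gval (IZR s - IZR t).
Proof.
  intros Hab H1 H2. unfold fs.
  rewrite (RI_ext _ (fun y => (fun x => Dl q r x * Dl q r (x + IZR (s - t))) (y + - IZR s))).
  2: { intros; rewrite minus_IZR. f_equal; f_equal; ring. }
  assert (SH := RI_shift (fun x => Dl q r x * Dl q r (x + IZR (s - t))) (- IZR s) a1 b1).
  cbv beta in SH. rewrite SH. 2: { apply PC_ex_RInt. apply PC_mult. apply PC_Dl. apply PC_shift, PC_Dl. }
  rewrite Gfull. rewrite minus_IZR; reflexivity. lra.
  rewrite minus_IZR. lra. rewrite minus_IZR. lra.
Qed.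
End F.

Lemma m1sq r : (-1) ^ r * (-1) ^ r = 1.
Proof. rewrite <- Rpow_mult_distr. replace (-1 * -1) with 1 by ring. apply pow1. Qed.

Section Fold.
Variables q r : nat.
Let p := (q + r)%nat.

Lemma pair_refl (c s t s' t' : Z) a b :
  IZR s' = IZR c - INR p - 1 - IZR s -> IZR t' = IZR c - INR p - 1 - IZR t ->
  RInt (fun y => fs q r (IZR s') y * fs q r (IZR t') y) a b =
  RInt (fun y => fs q r (IZR s) y * fs q r (IZR t) y) (IZR c - b) (IZR c - a).
Proof.
  intros E1 E2. apply refl_int; try apply PC_fs.
  intros y Hy. rewrite E1, E2. unfold p. rewrite !reflect_fs by auto.
  transitivity ((-1) ^ r * (-1) ^ r * (fs q r (IZR s) (IZR c - y) * fs q r (IZR t) (IZR c - y))). ring.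
  rewrite m1sq. ring.
Qed.

Lemma cross_refl (c s t s' t' : Z) a b :
  IZR s' = IZR c - INR p - 1 - IZR s -> IZR t' = IZR c - INR p - 1 - IZR t ->
  RInt (fun y => fs q r (IZR s') y * fs q r (IZR t) y) a b =
  RInt (fun y => fs q r (IZR s) y * fs q r (IZR t') y) (IZR c - b) (IZR c - a).
Proof.
  intros E1 E2. apply refl_int; try apply PC_fs.
  intros y Hy. rewrite E1, E2. unfold p.
  assert (Hy' : nonint (IZR c - y)). { intros z E. apply (Hy (c - z)%Z). rewrite minus_IZR. lra. }
  rewrite (reflect_fs q r c s y Hy). rewrite (reflect_fs q r c t (IZR c - y) Hy').
  replace (IZR c - (IZR c - y)) with y by ring.
  ring.
Qed.
End Fold.

Section Main.
Variables p n r i j : nat.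
Hypothesis Hp : (1 <= p)%nat.
Hypothesis Hn : (p + 1 <= n)%nat.
Hypothesis Hr : (r <= p)%nat.
Hypothesis Hi : (1 <= i <= n)%nat.
Hypothesis Hj : (1 <= j <= n)%nat.

Let q := (p - r)%nat.
Let zd := (Z.of_nat i - 1)%Z.
Let zLi := (- Z.of_nat i)%Z.
Let zRi := (2 * Z.of_nat n - Z.of_nat i)%Z.
Let ze := (Z.of_nat j - 1)%Z.
Let zLj := (- Z.of_nat j)%Z.
Let zRj := (2 * Z.of_nat n - Z.of_nat j)%Z.
Let A := INR p / 2.
Let B := INR n + INR p / 2.

Definition Sf (s1 s2 s3 : Z) (y : R) := fs q r (IZR s1) y + fs q r (IZR s2) y + fs q r (IZR s3) y.

Lemma PC_fs1 (s : Z) : PC (fs q r (IZR s)).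
Proof.
  unfold fs. apply (PC_ext (fun y => Dl q r (y + IZR (- s)))). intros; rewrite opp_IZR; f_equal; ring. apply PC_shift, PC_Dl.
Qed.

Lemma PC_SS s1 s2 s3 t1 t2 t3 : PC (fun y => Sf s1 s2 s3 y * Sf t1 t2 t3 y).
Proof. unfold Sf. apply PC_mult; repeat apply PC_plus; apply PC_fs1. Qed.

Lemma IZR_nat (m : nat) : IZR (Z.of_nat m) = INR m.
Proof. rewrite <- INR_IZR_INZ. reflexivity. Qed.

Lemma Dn_Sf (k : nat) (zk zL zR : Z) x : (1 <= k <= n)%nat -> zk = (Z.of_nat k - 1)%Z -> zL = (- Z.of_nat k)%Z ->
  zR = (2 * Z.of_nat n - Z.of_nat k)%Z -> 0 <= x <= 1 ->
  Derive_n (NeuB p n k) r x = INR n ^ r * Sf zk zL zR (INR n * x + A).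
Proof.
  intros Hk -> -> -> Hx. rewrite Dn_NeuB; auto. unfold Sf, fs, A. fold q.
  rewrite !minus_IZR, opp_IZR, mult_IZR, !IZR_nat. simpl IZR.
  f_equal. f_equal; [f_equal|]; f_equal; field.
Qed.

Lemma Xmat_eq : Xmat p r n i j = INR n ^ r * INR n ^ r * / INR n * RInt (fun y => Sf zd zLi zRi y * Sf ze zLj zRj y) A B.
Proof.
  assert (n0 : 0 < INR n). { apply lt_0_INR. lia. }
  unfold Xmat.
  rewrite (RI_ext _ (fun x => INR n ^ r * INR n ^ r * / INR n * (INR n * (Sf zd zLi zRi (INR n * x + A) * Sf ze zLj zRj (INR n * x + A))))).
  2: { intros x Hx. rewrite Rmin_left, Rmax_right in Hx by lra.
       rewrite (Dn_Sf i zd zLi zRi), (Dn_Sf j ze zLj zRj) by (auto; lra). field. lra. }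
  rewrite RI_scal. 2: { exact (ex_RInt_comp_lin (fun y => Sf zd zLi zRi y * Sf ze zLj zRj y) (INR n) A 0 1 (PC_ex_RInt _ (PC_SS _ _ _ _ _ _) _ _)). }
  rewrite (RI_lin (fun y => Sf zd zLi zRi y * Sf ze zLj zRj y) (INR n) A 0 1).
  - replace (INR n * 0 + A) with A by ring. replace (INR n * 1 + A) with B by (unfold B, A; ring). reflexivity.
  - apply PC_ex_RInt, PC_SS.
Qed.

Definition Jst (s t : Z) (a b : R) := RInt (fun y => fs q r (IZR s) y * fs q r (IZR t) y) a b.

Lemma qr : (q + r)%nat = p.
Proof. unfold q. lia. Qed.

Ltac pcx := apply PC_ex_RInt; repeat apply PC_plus; apply PC_fs.

Lemma fold9 : RInt (fun y => Sf zd zLi zRi y * Sf ze zLj zRj y) A B =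
  Gval q r (IZR zd - IZR ze) + Gval q r (IZR zd - IZR zLj) + Gval q r (IZR zd - IZR zRj).
Proof.
  pose proof qr as QR.
  assert (n1 : INR p + 1 <= INR n). { rewrite <- S_INR. apply le_INR. lia. }
  assert (p0 : 0 <= INR p) by apply pos_INR.
  assert (i1 : 1 <= INR i <= INR n). { split; [change 1 with (INR 1)|]; apply le_INR; lia. }
  assert (j1 : 1 <= INR j <= INR n). { split; [change 1 with (INR 1)|]; apply le_INR; lia. }
  assert (Ezd : IZR zd = INR i - 1). { unfold zd. rewrite minus_IZR, IZR_nat. reflexivity. }
  assert (Eze : IZR ze = INR j - 1). { unfold ze. rewrite minus_IZR, IZR_nat. reflexivity. }
  assert (EzLi : IZR zLi = - INR i). { unfold zLi. rewrite opp_IZR, IZR_nat. reflexivity. }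
  assert (EzLj : IZR zLj = - INR j). { unfold zLj. rewrite opp_IZR, IZR_nat. reflexivity. }
  assert (EzRi : IZR zRi = 2 * INR n - INR i). { unfold zRi. rewrite minus_IZR, mult_IZR, !IZR_nat. reflexivity. }
  assert (EzRj : IZR zRj = 2 * INR n - INR j). { unfold zRj. rewrite minus_IZR, mult_IZR, !IZR_nat. reflexivity. }
  set (P := fun (s t : Z) y => fs q r (IZR s) y * fs q r (IZR t) y).
  rewrite (RI_ext _ (fun y => P zd ze y + P zd zLj y + P zd zRj y + P zLi ze y + P zLi zLj y + P zLi zRj y
      + P zRi ze y + P zRi zLj y + P zRi zRj y)).
  2: { intros; unfold P, Sf. ring. }
  unfold P. rewrite !RI_plus by pcx.
  set (cL := Z.of_nat p). set (cR := (2 * Z.of_nat n + Z.of_nat p)%Z).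
  assert (EcL : IZR cL = INR p) by (unfold cL; apply IZR_nat).
  assert (EcR : IZR cR = 2 * INR n + INR p) by (unfold cR; rewrite plus_IZR, mult_IZR, !IZR_nat; reflexivity).
  rewrite (pair_refl q r cL zd ze zLi zLj A B) by (rewrite QR; lra).
  rewrite (pair_refl q r cR zd ze zRi zRj A B) by (rewrite QR; lra).
  rewrite (cross_refl q r cL zd ze zLi zLj A B) by (rewrite QR; lra).
  rewrite (cross_refl q r cR zd ze zRi zRj A B) by (rewrite QR; lra).
  replace (IZR cL - B) with (A - INR n) by (unfold A, B; lra).
  replace (IZR cL - A) with A by (unfold A; lra).
  replace (IZR cR - B) with B by (unfold A, B; lra).
  replace (IZR cR - A) with (B + INR n) by (unfold A, B; lra).
  assert (V1 : RInt (fun y => fs q r (IZR zLi) y * fs q r (IZR zRj) y) A B = 0).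
  { apply RI_zero. intros x _. unfold fs. destruct (Rle_dec (INR p) x).
    - rewrite (Dl_big q r (x - IZR zLi)). ring. rewrite QR. lra.
    - rewrite (Dl_neg q r (x - IZR zRj)). ring. lra. }
  assert (V2 : RInt (fun y => fs q r (IZR zRi) y * fs q r (IZR zLj) y) A B = 0).
  { apply RI_zero. intros x _. unfold fs. destruct (Rle_dec (INR p) x).
    - rewrite (Dl_big q r (x - IZR zLj)). ring. rewrite QR. lra.
    - rewrite (Dl_neg q r (x - IZR zRi)). ring. lra. }
  assert (C1 : RInt (fun y => fs q r (IZR zd) y * fs q r (IZR ze) y) (A - INR n) A
             + RInt (fun y => fs q r (IZR zd) y * fs q r (IZR ze) y) A B
             + RInt (fun y => fs q r (IZR zd) y * fs q r (IZR ze) y) B (B + INR n) = Gval q r (IZR zd - IZR ze)).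
  { rewrite RI_chasles by pcx. rewrite RI_chasles by pcx. apply Ifull; rewrite ?QR; unfold A, B; lra. }
  assert (C2 : RInt (fun y => fs q r (IZR zd) y * fs q r (IZR zLj) y) (A - INR n) A
             + RInt (fun y => fs q r (IZR zd) y * fs q r (IZR zLj) y) A B = Gval q r (IZR zd - IZR zLj)).
  { rewrite RI_chasles by pcx. apply Ifull; rewrite ?QR; unfold A, B; lra. }
  assert (C3 : RInt (fun y => fs q r (IZR zd) y * fs q r (IZR zRj) y) A B
             + RInt (fun y => fs q r (IZR zd) y * fs q r (IZR zRj) y) B (B + INR n) = Gval q r (IZR zd - IZR zRj)).
  { rewrite RI_chasles by pcx. apply Ifull; rewrite ?QR; unfold A, B; lra. }
  rewrite V1, V2. lra.
Qed.

End Main.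

Lemma Dl_zero c w : (1 <= c)%nat -> Dl c w 0 = 0.
Proof.
  intros H. induction w; simpl. apply cardB_0; auto. rewrite IHw, Dl_neg by lra. ring.
Qed.

Lemma Gval_sym q r x : Gval q r (- x) = Gval q r x.
Proof.
  unfold Gval. f_equal.
  transitivity ((-1) ^ (r + r) * Dl (q + q + 1) (r + r) (INR (q + r) + 1 + x)).
  2: { rewrite pow_add, m1sq. ring. }
  rewrite <- (Dl_sym (q + q + 1) (r + r) (INR (q + r) + 1 + x)) by (left; lia).
  f_equal.
  rewrite !plus_INR. simpl INR. lra.
Qed.

Lemma Gval_alpha p r k : (r <= p)%nat -> Gval (p - r) r (INR k) = alpha p r k.
Proof.
  intros Hr. rewrite <- Gval_sym. unfold Gval, alpha.
  replace (p - r + r)%nat with p by lia.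
  replace (p - r + (p - r) + 1)%nat with (2 * p + 1 - 2 * r)%nat by lia.
  replace (r + r)%nat with (2 * r)%nat by lia.
  destruct (Nat.leb k p) eqn:E.
  - apply Nat.leb_le in E. rewrite Derive_n_cardB by lia. reflexivity.
  - apply Nat.leb_gt in E. apply lt_INR in E.
    destruct (Rlt_dec (INR p + 1 + - INR k) 0).
    + rewrite Dl_neg by auto. ring.
    + assert (INR k = INR p + 1).
      { assert (INR (S p) <= INR k) by (apply le_INR; apply INR_lt in E; lia). rewrite S_INR in H. lra. }
      replace (INR p + 1 + - INR k) with 0 by lra. rewrite Dl_zero by lia. ring.
Qed.

Theorem mainTheorem6 (p n r : nat) :
  (1 <= p)%nat -> (1 <= n)%nat -> (r <= p)%nat ->
  (Nat.max (2 * p - p / 2) (2 * p - 2 * (p / 2) + 1) <= n)%nat ->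
  forall i j : nat, (1 <= i <= n)%nat -> (1 <= j <= n)%nat ->
  Xmat p r n i j
  = powerRZ (INR n) (2 * Z.of_nat r - 1)%Z
    * (Tmat (alpha p r) i j + Hmat (alpha p r) n i j).
Proof.
  intros Hp Hn1 Hr Hmax i j Hi Hj.
  assert (Hn : (p + 1 <= n)%nat) by (pose proof (Nat.mul_div_le p 2); lia).
  rewrite (Xmat_eq p n r i j Hp Hn Hr Hi Hj). rewrite (fold9 p n r i j Hp Hn Hr Hi Hj).
  assert (n0 : INR n <> 0). { apply not_0_INR. lia. }
  assert (PW : powerRZ (INR n) (2 * Z.of_nat r - 1) = INR n ^ r * INR n ^ r * / INR n).
  { replace (2 * Z.of_nat r - 1)%Z with (Z.of_nat (r + r) + (-1))%Z by lia.
    rewrite powerRZ_add by auto. rewrite <- pow_powerRZ. rewrite pow_add. simpl. field. auto. }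
  rewrite PW. f_equal.
  rewrite !minus_IZR, !opp_IZR, !mult_IZR, <- !INR_IZR_INZ.
  unfold Tmat, Hmat.
  assert (E1 : Gval (p - r) r (INR i - 1 - (INR j - 1)) = alpha p r (if Nat.leb i j then (j - i)%nat else (i - j)%nat)).
  { destruct (Nat.leb i j) eqn:E.
    - apply Nat.leb_le in E. rewrite <- Gval_alpha by auto. rewrite minus_INR by auto. rewrite <- Gval_sym. f_equal. ring.
    - apply Nat.leb_gt in E. rewrite <- Gval_alpha by auto. rewrite minus_INR by lia. f_equal. ring. }
  assert (E2 : Gval (p - r) r (INR i - 1 - - INR j) = alpha p r (i + j - 1)).
  { rewrite <- Gval_alpha by auto. rewrite minus_INR by lia. rewrite plus_INR. f_equal. simpl. ring. }
  assert (E3 : Gval (p - r) r (INR i - 1 - (IZR 2 * INR n - INR j)) = alpha p r (2 * n + 1 - i - j)).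
  { rewrite <- Gval_alpha by auto. rewrite <- Gval_sym.
    replace (2 * n + 1 - i - j)%nat with (2 * n + 1 - (i + j))%nat by lia.
    rewrite minus_INR by lia. rewrite plus_INR, mult_INR, plus_INR. f_equal. simpl. ring. }
  rewrite E1, E2, E3. ring.
Qed.
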